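(* Let $\alpha\in\Lambda^+(r)$, and let $\Theta: e\mathbf H_r(0)\,\phi(e_\alpha)\to(e_\alpha\mathbf H_r(0)e)^*$ be defined by $\Theta(eh\,\phi(e_\alpha))(x)=\varepsilon(xh)$ for $h\in\mathbf H_r(0)$ and $x\in e_\alpha\mathbf H_r(0)e$. Then $\Theta$ is a well-defined isomorphism of left $e\mathbf H_r(0)e$-modules.
   Context: $\mathbf H_r(0)$ is the $0$-Hecke algebra over $\mathbb C$, generated by $\bar\pi_1,\dots,\bar\pi_{r-1}$ with $\bar\pi_i^2=-\bar\pi_i$, the braid relations, and far commutation. Set $\pi_i=\bar\pi_i+1$; for $w\in\mathfrak S_r$ with reduced word $s_{i_1}\cdots s_{i_p}$, $\pi_w=\pi_{i_1}\cdots\pi_{i_p}$. $w_0$ is the longest element of $\mathfrak S_r$. $\varepsilon:\mathbf H_r(0)\to\mathbb C$ is the linear functional with $\varepsilon(\pi_w)=1$ if $w=w_0$ and $0$ otherwise. $\phi:\mathbf H_r(0)\to\mathbf H_r(0)$ is the algebra involution $\pi_i\mapsto\pi_{r-i}$; it is the Nakayama automorphism for $\varepsilon$, i.e. $\varepsilon(ab)=\varepsilon(b\phi(a))$. $\Lambda^+(r)$ is the set of strong compositions of $r$ and $\ell(\alpha)$ the number of parts. $\{e_\beta:\beta\in\Lambda^+(r)\}$ is a complete set of primitive orthogonal idempotents of $\mathbf H_r(0)$ such that $\mathbf H_r(0)e_\beta$ is the projective indecomposable module with top the simple module indexed by $\beta$. Fix $n$ and put $e=\sum_{\beta\in\Lambda^+(r),\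 \ell(\beta)\le n}e_\beta$. The left $e\mathbf H_r(0)e$-module structure on $(e_\alpha\mathbf H_r(0)e)^*$ is $(y\cdot\delta)(x)=\delta(xy)$ for $y\in e\mathbf H_r(0)e$; the one on $e\mathbf H_r(0)\phi(e_\alpha)$ is left multiplication. *)

(* Defs.v *)
From HB Require Import structures.
From mathcomp Require Import all_boot all_order all_fingroup all_algebra all_field.
Set Implicit Arguments. Unset Strict Implicit. Unset Printing Implicit Defensive.
Import Order.TTheory GRing.Theory Num.Theory.
Local Open Scope ring_scope.

(* The simple transposition s_i (1 <= i <= r-1), swapping positions i-1 and i
   (0-based), i.e. the paper's s_i on {1,...,r}.  Identity if i is out of range. *)
Definition sref (r i : nat) : 'S_r :=
  match [pick k : 'I_r | val k == i.-1], [pick k : 'I_r | val k == i] with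
  | Some a, Some b => if (0 < i)%N then tperm a b else 1%g
  | _, _ => 1%g
  end.

Definition linv (r : nat) (w : 'S_r) : nat :=
  #|[set p : 'I_r * 'I_r | (p.1 < p.2)%N && (w p.2 < w p.1)%N]|.

(* A reduced word of w (computed greedily by stripping left descents):
   w = s_{i1} * s_{i2} * ... * s_{ip} (group product of 'S_r). *)
Fixpoint rw_aux (r fuel : nat) (w : 'S_r) : seq nat :=
  if fuel is f.+1 then
    match [pick i : 'I_r | (0 < val i)%N && (linv (sref r i * w)%g < linv w)%N] with
    | Some i => (val i) :: rw_aux f (sref r i * w)%g
    | None => [::]
    end
  else [::].
Definition redword (r : nat) (w : 'S_r) : seq nat := rw_aux (linv w) w.

Definition w0 (r : nat) : 'S_r := perm (@rev_ord_inj r).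

Definition is_comp (r : nat) (b : seq nat) : bool := all (fun k => 0 < k)%N b && (sumn b == r).

(* explicit enumeration of Lambda^+(r): compositions of r.+1 are 1::c or
   (c_1+1)::c' for c = c_1::c' a composition of r *)
Fixpoint comps (r : nat) : seq (seq nat) :=
  if r is r'.+1 then
    [seq 1%N :: c | c <- comps r'] ++
    [seq (head 0%N c).+1 :: behead c | c <- comps r' & c != [::]]
  else [:: [::]].

Definition cdesc (b : seq nat) : seq nat := [seq sumn (take k b) | k <- iota 1 (size b).-1].

Section Hecke.
Variable A : falgType algC.

(* The 0-Hecke algebra H_r(0): A is a finite-dimensional C-algebra with elements
   pb i = \bar\pi_i (1 <= i <= r-1) satisfying the defining relations and such that
   the elements pi_w (w in S_r) form a basis of A (so A ~ H_r(0)). *)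
Definition piw (pb : nat -> A) (r : nat) (w : 'S_r) : A :=
  \prod_(i <- redword w) (1 + pb i).

Definition is_zero_Hecke (r : nat) (pb : nat -> A) : Prop :=
  [/\ forall i, (1 <= i <= r.-1)%N -> pb i * pb i = - pb i,
      forall i, (1 <= i)%N -> (i.+1 <= r.-1)%N ->
        pb i * pb i.+1 * pb i = pb i.+1 * pb i * pb i.+1,
      forall i j, (1 <= i <= r.-1)%N -> (1 <= j <= r.-1)%N -> (i.+1 < j)%N ->
        pb i * pb j = pb j * pb i
    & basis_of fullv [seq piw pb w | w <- enum [set: 'S_r]]].

Definition is_eps (r : nat) (pb : nat -> A) (eps : A -> algC) : Prop :=
  (forall c a b, eps (c *: a + b) = c * eps a + eps b) /\
  (forall w : 'S_r, eps (piw pb w) = (w == w0 r)%:R).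

(* phi : the algebra involution pi_i |-> pi_{r-i} (equivalently pb i |-> pb (r-i));
   by the standing context it is the Nakayama automorphism of eps. *)
Definition is_phi (r : nat) (pb : nat -> A) (eps : A -> algC) (phi : A -> A) : Prop :=
  [/\ forall c a b, phi (c *: a + b) = c *: phi a + phi b,
      forall a b, phi (a * b) = phi a * phi b,
      phi 1 = 1,
      forall i, (1 <= i <= r.-1)%N -> phi (pb i) = pb (r - i)%N
    & forall a b, eps (a * b) = eps (b * phi a)].

(* chi : the character of the one-dimensional simple module indexed by the
   composition b: \bar\pi_i acts by -1 if i is a descent of b, by 0 otherwise. *)
Definition is_simple_char (r : nat) (pb : nat -> A) (b : seq nat) (chi : A -> algC) : Prop :=
  [/\ forall c x y, chi (c *: x + y) = c * chi x + chi y,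
      forall x y, chi (x * y) = chi x * chi y,
      chi 1 = 1
    & forall i, (1 <= i <= r.-1)%N -> chi (pb i) = if i \in cdesc b then -1 else 0].

Definition idem (f : A) : Prop := f * f = f.

Definition primitive_idem (f : A) : Prop :=
  [/\ f != 0, idem f &
      forall g h, idem g -> idem h -> g * h = 0 -> h * g = 0 -> f = g + h ->
        g = 0 \/ h = 0].

(* {e_b : b in Lambda^+(r)} is a complete set of primitive orthogonal idempotents
   with A e_b the projective cover of the simple module indexed by b, i.e.
   e_b acts non-trivially on that (one-dimensional) simple module. *)
Definition is_PIM_idempotents (r : nat) (pb : nat -> A) (chi : seq nat -> A -> algC)
    (ec : seq nat -> A) : Prop :=
  [/\ forall b, b \in comps r -> is_simple_char r pb b (chi b),
      forall b, b \in comps r -> primitive_idem (ec b),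
      forall b c, b \in comps r -> c \in comps r -> ec b * ec c = if b == c then ec b else 0,
      \sum_(b <- comps r) ec b = 1
    & forall b, b \in comps r -> chi b (ec b) != 0].

Definition etrunc (r n : nat) (ec : seq nat -> A) : A :=
  \sum_(b <- comps r | (size b <= n)%N) ec b.

End Hecke.

(* Main.v *)
Require Import Defs.
From HB Require Import structures.
From mathcomp Require Import all_boot all_order all_fingroup all_algebra all_field.
From mathcomp Require Import zify.
Import Order.TTheory GRing.Theory Num.Theory.
Set Implicit Arguments. Unset Strict Implicit. Unset Printing Implicit Defensive.

Lemma sref_tperm r (a b : 'I_r) : val b = (val a).+1 -> sref r (val b) = tperm a b.
Proof.
move=> hab; rewrite /sref.
case: pickP => [a' /eqP ha|H]; last by move: (H a); rewrite hab /= eqxx.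
case: pickP => [b' /eqP hb|H]; last by move: (H b); rewrite eqxx.
have -> : a' = a by apply: val_inj; rewrite ha hab.
have -> : b' = b by apply: val_inj; rewrite hb.
by rewrite hab.
Qed.

Lemma tperm_adj_val r (a b x : 'I_r) : val b = (val a).+1 ->
  val (tperm a b x) = if val x == val a then val b else if val x == val b then val a else val x.
Proof.
move=> hab; case: tpermP => [->|->|hxa hxb]; rewrite ?eqxx //.
  by rewrite ifN // hab; apply/eqP; lia.
rewrite ifN; last by apply/eqP=> /val_inj.
by rewrite ifN //; apply/eqP=> /val_inj.
Qed.

Lemma linv_asc r (w : 'S_r) (a b : 'I_r) : val b = (val a).+1 -> w a < w b ->
  linv (tperm a b * w)%g = (linv w).+1.
Proof.
move=> hab hw.
set s := tperm a b.
pose g (p : 'I_r * 'I_r) := (s p.1, s p.2).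
have ginj : injective g.
  by move=> [p q] [p' q'] [] /perm_inj -> /perm_inj ->.
have key : forall p q : 'I_r, p < q -> (val p, val q) != (val a, val b) -> s p < s q.
  move=> [p hp] [q hq] /= hpq hne; rewrite !tperm_adj_val //=.
  move: hne; rewrite xpair_eqE negb_and => hne.
  have hab2 : nat_of_ord b = (nat_of_ord a).+1 := hab.
  by repeat (case: ifP => /eqP ?); lia.
rewrite /linv.
suff -> : [set p : 'I_r * 'I_r | (p.1 < p.2) && ((s * w)%g p.2 < (s * w)%g p.1)] =
   (a, b) |: (g @: [set p : 'I_r * 'I_r | (p.1 < p.2) && (w p.2 < w p.1)]).
  rewrite cardsU1 card_imset //; suff -> : (a, b) \notin g @: [set p : 'I_r * 'I_r | (p.1 < p.2) && (w p.2 < w p.1)] by rewrite add1n.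
  apply/negP=> /imsetP [[p q]]; rewrite inE /= => /andP[hpq hwpq] [].
  move=> ha hb.
  have hp : p = b by rewrite -(tpermK a b p) -/s -ha tpermL.
  have hq : q = a by rewrite -(tpermK a b q) -/s -hb tpermR.
  subst p q; move: hpq; have hab2 : nat_of_ord b = (nat_of_ord a).+1 := hab. lia.
apply/setP=> [[p q]]; rewrite !inE /= !permM.
apply/idP/idP.
- move=> /andP[hpq hw'].
  case: (eqVneq (p, q) (a, b)) => [-> //|hne]; apply/orP; right.
  apply/imsetP; exists (s p, s q); last by rewrite /g /= !tpermK.
  rewrite inE /= hw' andbT.
  by apply: key => //; apply: contra hne => /eqP [h1 h2]; apply/eqP.
- case/orP => [/eqP [-> ->]|/imsetP [[p' q']]].
    by rewrite /s tpermL tpermR hw andbT -[nat_of_ord b]/(val b) hab.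
  rewrite inE /= => /andP [hpq hwpq] [-> ->]; rewrite !tpermK hwpq andbT.
  apply: key => //; apply/negP; rewrite xpair_eqE => /andP[/eqP h1 /eqP h2].
  suff : (p', q') = (a, b) by move=> [e1 e2]; move: hwpq; rewrite e1 e2 ltnNge ltnW.
  by rewrite (val_inj h1) (val_inj h2).
Qed.

Definition prv r (j : 'I_r) : 'I_r := Ordinal (leq_ltn_trans (leq_pred j) (ltn_ord j)).
Definition tp r (j : 'I_r) : 'S_r := tperm (prv j) j.

Lemma prvS r (j : 'I_r) : 0 < j -> val j = (val (prv j)).+1.
Proof. by move=> h /=; rewrite prednK. Qed.

Lemma sref_tp r (j : 'I_r) : 0 < j -> sref r j = tp j.
Proof. by move=> h; rewrite /tp -sref_tperm -?prvS. Qed.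

Lemma tp_val r (j x : 'I_r) : 0 < j ->
  val (tp j x) = if val x == (val j).-1 then val j else if val x == val j then (val j).-1 else val x.
Proof. by move=> h; rewrite /tp tperm_adj_val -?prvS. Qed.

Lemma tpK r (j : 'I_r) (v : 'S_r) : (tp j * (tp j * v) = v)%g.
Proof. by rewrite mulgA tperm2 mul1g. Qed.

Lemma linv_desc r (w : 'S_r) (j : 'I_r) : 0 < j -> w j < w (prv j) ->
  linv w = (linv (tp j * w)%g).+1.
Proof.
move=> hj hw; have := @linv_asc r (tp j * w)%g (prv j) j (prvS hj).
by rewrite -/(tp j) tpK; apply; rewrite !permM /tp tpermL tpermR.
Qed.

Lemma linv_lt r (w : 'S_r) (j : 'I_r) : 0 < j ->
  (linv (tp j * w)%g < linv w) = (w j < w (prv j)).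
Proof.
move=> hj; case: (ltngtP (w j) (w (prv j))) => h.
- by rewrite [linv w](linv_desc hj h) ltnSn.
- by rewrite /tp linv_asc -?prvS // ltnNge leqnSn.
- have /perm_inj /(congr1 val) : w j = w (prv j) by apply: val_inj.
  by move=> /= e; exfalso; lia.
Qed.

Lemma linv_le r (w : 'S_r) : linv w <= r * r.
Proof. by rewrite /linv (leq_trans (max_card _)) // card_prod card_ord. Qed.

Lemma redword_pick r (w : 'S_r) : redword w =
  match [pick i : 'I_r | (0 < val i) && (linv (sref r i * w)%g < linv w)] with
  | Some i => val i :: redword (sref r i * w)%g
  | None => [::] end.
Proof.
rewrite /redword; case E: (linv w) => [|f] /=.
  by case: pickP => // i /andP[_]; rewrite ltn0.
rewrite -E; case: pickP => // i /andP[hi hlt]; congr cons.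
move: hlt; rewrite sref_tp // linv_lt // => /(linv_desc hi).
by rewrite E => -[<-].
Qed.

Ltac ifcase := repeat match goal with |- context[if ?c then _ else _] =>
  lazymatch c with context[if _ then _ else _] => fail | _ =>
  let h := fresh "h" in case: (boolP c) => h /= end end.

Lemma tp_fix r (k x : 'I_r) : 0 < k -> val x != (val k).-1 -> val x != val k -> tp k x = x.
Proof. by move=> hk h1 h2; apply: val_inj; rewrite tp_val // (negbTE h1) (negbTE h2). Qed.

Lemma tp_comm r (j k : 'I_r) : 0 < j -> 0 < k -> ((val j).+1 < val k) || ((val k).+1 < val j) ->
  (tp j * tp k = tp k * tp j)%g.
Proof.
move=> hj hk h; apply/permP => x; apply: val_inj; rewrite !permM !tp_val //.
have hj' : 0 < val j := hj; have hk' : 0 < val k := hk.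
simpl in *; ifcase; lia.
Qed.

Lemma tp_braid r (a b : 'I_r) : 0 < a -> val b = (val a).+1 ->
  (tp a * tp b * tp a = tp b * tp a * tp b)%g.
Proof.
move=> ha hab; have hb : 0 < b by rewrite -[nat_of_ord b]/(val b) hab.
apply/permP => x; apply: val_inj; rewrite !permM !tp_val //.
have ha' : 0 < val a := ha.
simpl in *; ifcase; lia.
Qed.


Local Open Scope ring_scope.

Lemma aux3 (R : pzRingType) (x y : R) : x * x = - x ->
  (1 + x) * (1 + y) * (1 + x) = 1 + x + y + x * y + y * x + x * y * x.
Proof.
move=> hx; rewrite !(mulrDl, mulrDr, mul1r, mulr1) hx.
rewrite [x + y * x]addrC -[y * x + x + _]addrA [x + (- x + _)]addrA addrN add0r !addrA.
by rewrite [1 + y + x]addrAC.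
Qed.


Lemma braidP (R : pzRingType) (x y : R) : x * x = - x -> y * y = - y -> x * y * x = y * x * y ->
  (1 + x) * (1 + y) * (1 + x) = (1 + y) * (1 + x) * (1 + y).
Proof.
move=> hx hy hb; rewrite !aux3 // hb [1 + y + x]addrAC.
by rewrite [1 + x + y + y * x + x * y]addrAC.
Qed.


Lemma piw_some (A : falgType algC) (pb : nat -> A) r (w : 'S_r) (j : 'I_r) :
  (0 < j)%N -> (linv (tp j * w)%g < linv w)%N ->
  exists k : 'I_r, [/\ (0 < k)%N, (linv (tp k * w)%g < linv w)%N &
    piw pb w = (1 + pb k) * piw pb (tp k * w)%g].
Proof.
move=> hj hl; rewrite /piw redword_pick; case: pickP => [k /andP[hk hlt]|H].
  by exists k; rewrite big_cons -sref_tp.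
by move: (H j); rewrite hj sref_tp // hl.
Qed.

Lemma piw_desc (A : falgType algC) (pb : nat -> A) r
  (H1 : forall i, (1 <= i <= r.-1)%N -> pb i * pb i = - pb i)
  (H2 : forall i, (1 <= i)%N -> (i.+1 <= r.-1)%N ->
        pb i * pb i.+1 * pb i = pb i.+1 * pb i * pb i.+1)
  (H3 : forall i j, (1 <= i <= r.-1)%N -> (1 <= j <= r.-1)%N -> (i.+1 < j)%N ->
        pb i * pb j = pb j * pb i) :
  forall (v : 'S_r) (j : 'I_r), (0 < j)%N -> (v j < v (prv j))%N ->
  piw pb v = (1 + pb j) * piw pb (tp j * v)%g.
Proof.
move=> v; have [N] := ubnP (linv v); elim: N v => // N IH v hv j hj hd.
have IHv : forall u : 'S_r, (linv u < linv v)%N -> forall i : 'I_r, (0 < i)%N ->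
    (u i < u (prv i))%N -> piw pb u = (1 + pb i) * piw pb (tp i * u)%g.
  by move=> u hu; apply: IH; lia.
have [k [hk hlt ->]] := piw_some pb (hj : (0 < j)%N) (etrans (linv_lt v hj) hd).
rewrite linv_lt // in hlt.
have [ejk|nejk] := eqVneq j k; first by rewrite ejk.
have hjr := ltn_ord j; have hkr := ltn_ord k.
have nejk' : nat_of_ord j != nat_of_ord k := nejk.
have [far|near] : (((nat_of_ord j).+1 < k) || ((nat_of_ord k).+1 < j))%N \/
   ((nat_of_ord j).+1 = k \/ (nat_of_ord k).+1 = j)%N by lia.
- have e1 : piw pb (tp k * v)%g = (1 + pb j) * piw pb (tp j * (tp k * v))%g.
    apply: IHv => //; first by rewrite (linv_desc hk hlt).
    rewrite !permM !tp_fix //=; lia.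
  have e2 : piw pb (tp j * v)%g = (1 + pb k) * piw pb (tp k * (tp j * v))%g.
    apply: IHv => //; first by rewrite (linv_desc hj hd).
    rewrite !permM !tp_fix //=; lia.
  rewrite e1 e2 !mulgA (tp_comm hj hk) //= !mulrA; congr (_ * _).
  rewrite !mulrDl !mulrDr !mul1r !mulr1 -!addrA; congr (_ + _).
  case/orP: far => h.
  + by rewrite (H3 j k) ?addrA ?[pb k + _]addrC //; lia.
  + by rewrite (H3 k j) ?addrA ?[pb k + _]addrC //; lia.
have adj : forall a b : 'I_r, (0 < a)%N -> nat_of_ord b = (nat_of_ord a).+1 ->
    (v a < v (prv a))%N -> (v b < v (prv b))%N ->
    (1 + pb a) * piw pb (tp a * v)%g = (1 + pb b) * piw pb (tp b * v)%g.
  move=> a b ha hab hda hdb0.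
  have hb : (0 < b)%N by lia.
  have hbr := ltn_ord b.
  have pb_ : prv b = a by apply: val_inj => /=; lia.
  have hdb := hdb0; rewrite pb_ in hdb.
  have t1 : tp a b = b by apply: tp_fix => //=; lia.
  have t2 : tp a a = prv a by rewrite /tp tpermR.
  have t3 : tp b a = b by rewrite /tp -pb_ tpermL.
  have t4 : tp b b = a by rewrite /tp tpermR pb_.
  have t5 : tp b (prv a) = prv a by apply: tp_fix => //=; lia.
  have t6 : tp a (prv a) = a by rewrite /tp tpermL.
  have l1 := linv_desc ha hda.
  have d2 : ((tp a * v)%g b < (tp a * v)%g (prv b))%N by rewrite !permM pb_ t1 t2; lia.
  have l2 := linv_desc hb d2.
  have d3 : ((tp b * (tp a * v))%g a < (tp b * (tp a * v))%g (prv a))%N.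
    by rewrite !permM t3 t1 t5 t6.
  have e1 := IHv (tp a * v)%g (ltac:(lia)) b hb d2.
  have e2 := IHv (tp b * (tp a * v))%g (ltac:(lia)) a ha d3.
  have m1 := linv_desc hb hdb0.
  have d4 : ((tp b * v)%g a < (tp b * v)%g (prv a))%N by rewrite !permM t3 t5; lia.
  have m2 := linv_desc ha d4.
  have d5 : ((tp a * (tp b * v))%g b < (tp a * (tp b * v))%g (prv b))%N.
    by rewrite !permM pb_ t1 t4 t2 t5.
  have f1 := IHv (tp b * v)%g (ltac:(lia)) a ha d4.
  have f2 := IHv (tp a * (tp b * v))%g (ltac:(lia)) b hb d5.
  have hab' : val b = (val a).+1 := hab.
  rewrite e1 e2 f1 f2 !mulgA (tp_braid ha hab') !mulrA; congr (_ * _).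
  rewrite hab; apply: braidP; [apply: H1|apply: H1|apply: H2]; lia.
case: near => h.
- by rewrite (adj j k).
- by rewrite (adj k j).
Qed.

Lemma idemP (R : pzRingType) (x : R) : x * x = - x -> (1 + x) * (1 + x) = 1 + x.
Proof. by move=> hx; rewrite !(mulrDl, mulrDr, mul1r, mulr1) hx subrr addr0. Qed.

Lemma piw_mul (A : falgType algC) (pb : nat -> A) r
  (H1 : forall i, (1 <= i <= r.-1)%N -> pb i * pb i = - pb i)
  (H2 : forall i, (1 <= i)%N -> (i.+1 <= r.-1)%N ->
        pb i * pb i.+1 * pb i = pb i.+1 * pb i * pb i.+1)
  (H3 : forall i j, (1 <= i <= r.-1)%N -> (1 <= j <= r.-1)%N -> (i.+1 < j)%N ->
        pb i * pb j = pb j * pb i) (u : 'S_r) (j : 'I_r) :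
  (0 < j)%N -> (1 + pb j) * piw pb u =
     if (u (prv j) < u j)%N then piw pb (tp j * u)%g else piw pb u.
Proof.
move=> hj; have hjr := ltn_ord j; case: ifP => h.
  have d : ((tp j * u)%g j < (tp j * u)%g (prv j))%N by rewrite !permM /tp tpermL tpermR.
  by rewrite (piw_desc H1 H2 H3 hj d) // tpK.
have d : (u j < u (prv j))%N.
  case: (ltngtP (u j) (u (prv j))) h => // e _.
  have /perm_inj /(congr1 val) : u j = u (prv j) by apply: val_inj.
  by move=> /= e'; exfalso; lia.
rewrite [in LHS](piw_desc H1 H2 H3 hj d) // mulrA idemP -?(piw_desc H1 H2 H3 hj d) //; apply: H1; lia.
Qed.

Lemma not_w0 r (w : 'S_r) : w != w0 r -> exists j : 'I_r, (0 < j)%N /\ (w (prv j) < w j)%N.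
Proof.
move=> hw; case: (boolP [exists j : 'I_r, (0 < j)%N && (w (prv j) < w j)%N]).
  by move=> /existsP [j /andP[h1 h2]]; exists j.
rewrite negb_exists => /forallP H'; exfalso; move/eqP: hw; apply.
have H : forall j : 'I_r, (0 < j)%N -> (w j < w (prv j))%N.
  move=> j hj; case: (ltngtP (w j) (w (prv j))) => // h.
    by move: (H' j); rewrite hj h.
  have /perm_inj /(congr1 val) : w j = w (prv j) by apply: val_inj.
  by move=> /= e'; exfalso; lia.
have i1 : forall k (hk : (k < r)%N), (val (w (Ordinal hk)) + k <= r.-1)%N.
  elim=> [|k IH] hk; first by have := ltn_ord (w (Ordinal hk)); simpl; lia.
  have hk0 : (k < r)%N by lia.
  have hp : prv (Ordinal hk) = Ordinal hk0 by apply: val_inj.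
  have := H (Ordinal hk) (ltn0Sn k); rewrite hp; have := IH hk0; simpl; lia.
have i2 : forall d (hd : (r.-1 - d < r)%N), (d < r)%N -> (d <= val (w (Ordinal hd)))%N.
  elim=> [|d IH] hd hdr //.
  have hd0 : (r.-1 - d < r)%N by lia.
  have hp : prv (Ordinal hd0) = Ordinal hd by apply: val_inj => /=; lia.
  have := H (Ordinal hd0) (ltac:(simpl; lia)); rewrite hp; have := IH hd0 (ltac:(lia)); simpl; lia.
apply/permP => x; apply: val_inj; rewrite /w0 permE /=.
have hx := ltn_ord x.
have e1 : Ordinal hx = x by apply: val_inj.
have hd : (r.-1 - (r.-1 - x) < r)%N by lia.
have e2 : Ordinal hd = x by apply: val_inj => /=; lia.
have := i1 _ hx; have := i2 _ hd (ltac:(lia)); rewrite e1 e2; simpl; lia.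
Qed.


Definition linf (A : falgType algC) (f : A -> algC) := forall c a b, f (c *: a + b) = c * f a + f b.

Lemma lin0 (A : falgType algC) (f : A -> algC) : linf f -> f 0 = 0.
Proof.
move=> hf; have h := hf 1 0 0; rewrite scaler0 addr0 mul1r in h.
by apply: (addIr (f 0)); rewrite add0r -h.
Qed.

Lemma linD (A : falgType algC) (f : A -> algC) : linf f -> forall a b, f (a + b) = f a + f b.
Proof. by move=> hf a b; rewrite -[a]scale1r hf mul1r scale1r. Qed.

Lemma linZ (A : falgType algC) (f : A -> algC) : linf f -> forall c a, f (c *: a) = c * f a.
Proof. by move=> hf c a; rewrite -[c *: a]addr0 hf lin0 // addr0. Qed.

Lemma lin_sum (A : falgType algC) (f : A -> algC) (I : finType) (c : I -> algC) (x : I -> A) :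
  linf f -> f (\sum_i c i *: x i) = \sum_i c i * f (x i).
Proof.
move=> hf; rewrite (big_morph f (linD hf) (lin0 hf)); apply: eq_bigr => i _.
exact: linZ.
Qed.

Lemma linf_l (A : falgType algC) (f : A -> algC) (z : A) : linf f -> linf (fun m => f (z * m)).
Proof. by move=> hf c a b /=; rewrite mulrDr -scalerAr hf. Qed.

Lemma linf_r (A : falgType algC) (f : A -> algC) (z : A) : linf f -> linf (fun m => f (m * z)).
Proof. by move=> hf c a b /=; rewrite mulrDl -scalerAl hf. Qed.


Lemma decomp (A : falgType algC) (pb : nat -> A) r :
  basis_of fullv [seq piw pb w | w <- enum [set: 'S_r]] ->
  forall m : A, exists c : 'S_r -> algC, m = \sum_w c w *: piw pb w.
Proof.
set s := enum _; set X := map _ s => hB m.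
have := @coord_basis _ _ _ _ (in_tuple X) m hB (memvf m) => ->.
exists (fun w => \sum_(i < size X | nth 1%g s i == w) coord (in_tuple X) i m).
rewrite (partition_big (fun i : 'I_(size X) => nth 1%g s i) predT) //=.
apply: eq_bigr => w _; rewrite scaler_suml; apply: eq_bigr => i /eqP <-.
by rewrite (nth_map 1%g) // -(size_map (@piw _ pb r)).
Qed.

Lemma indep (A : falgType algC) (pb : nat -> A) r :
  basis_of fullv [seq piw pb w | w <- enum [set: 'S_r]] ->
  forall c : 'S_r -> algC, \sum_w c w *: piw pb w = 0 -> forall w, c w = 0.
Proof.
set s := enum _; set X := map _ s => hB c hc w.
have /freeP H := basis_free hB : free (in_tuple X).
have hw : (index w s < size X)%N by rewrite size_map index_mem mem_enum in_setT.
rewrite -(nth_index 1%g (_ : w \in s)); last by rewrite mem_enum in_setT.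
apply: (H (fun i => c (nth 1%g s i)) _ (Ordinal hw)).
rewrite -(big_mkord xpredT (fun i => c (nth 1%g s i) *: X`_i)).
transitivity (\sum_(u <- s) c u *: piw pb u); last first.
  rewrite -[RHS]hc big_enum /=; apply: eq_bigl => u; by rewrite in_setT.
rewrite (big_nth 1%g) size_map.
by apply: eq_big_nat => i hi; rewrite (nth_map 1%g).
Qed.


Lemma key_nd (A : falgType algC) (pb : nat -> A) r (eps : A -> algC)
  (H1 : forall i, (1 <= i <= r.-1)%N -> pb i * pb i = - pb i)
  (H2 : forall i, (1 <= i)%N -> (i.+1 <= r.-1)%N ->
        pb i * pb i.+1 * pb i = pb i.+1 * pb i * pb i.+1)
  (H3 : forall i j, (1 <= i <= r.-1)%N -> (1 <= j <= r.-1)%N -> (i.+1 < j)%N ->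
        pb i * pb j = pb j * pb i)
  (epsL : linf eps) (epsW : forall w : 'S_r, eps (piw pb w) = (w == w0 r)%:R) :
  forall d (c : 'S_r -> algC) (w : 'S_r), c w != 0 ->
    (forall u, (linv w < linv u)%N -> c u = 0) -> (r * r - linv w)%N = d ->
    exists a, eps (a * \sum_u c u *: piw pb u) != 0.
Proof.
elim=> [|d IH] c w hc hmax hd.
all: case: (eqVneq w (w0 r)) => [ew|hne].
- exists 1; rewrite mul1r lin_sum // (bigD1 w) //= big1 ?addr0 ?epsW ?ew ?eqxx ?mulr1 -?ew //.
  by move=> u hu; rewrite epsW -ew (negbTE hu) mulr0.
- have [j [hj hasc]] := not_w0 hne.
  have := linv_le (tp j * w)%g; rewrite /tp linv_asc -?prvS //; lia.
- exists 1; rewrite mul1r lin_sum // (bigD1 w) //= big1 ?addr0 ?epsW ?ew ?eqxx ?mulr1 -?ew //.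
  by move=> u hu; rewrite epsW -ew (negbTE hu) mulr0.
have [j [hj hasc]] := not_w0 hne.
have hl : linv (tp j * w)%g = (linv w).+1 by rewrite /tp linv_asc -?prvS.
pose f (u : 'S_r) := if (u (prv j) < u j)%N then (tp j * u)%g else u.
have hf : forall u, (linv (f u) <= (linv u).+1)%N.
  by move=> u; rewrite /f; case: ifP => h; rewrite ?leqnSn // /tp linv_asc -?prvS.
pose c' v := \sum_(u | f u == v) c u.
have E : (1 + pb j) * \sum_u c u *: piw pb u = \sum_v c' v *: piw pb v.
  rewrite mulr_sumr.
  transitivity (\sum_u c u *: piw pb (f u)).
    apply: eq_bigr => u _; rewrite -scalerAr (piw_mul H1 H2 H3) //.
    by rewrite /f; case: ifP.
  rewrite (partition_big f xpredT (F := fun u => c u *: piw pb (f u))) //=; apply: eq_bigr => v _.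
  by rewrite scaler_suml; apply: eq_bigr => u /eqP ->.
have hc' : c' (tp j * w)%g = c w.
  rewrite /c' (bigD1 w) /=; last by rewrite /f hasc.
  rewrite big1 ?addr0 // => u /andP[/eqP fu hu]; move: fu.
  rewrite /f; case: ifP => h.
    by move/(mulgI (tp j)) => e; move: hu; rewrite e eqxx.
  by move=> e; apply: hmax; rewrite e hl.
have hmax' : forall v, (linv (tp j * w)%g < linv v)%N -> c' v = 0.
  move=> v hv; rewrite /c' big1 // => u /eqP e; apply: hmax.
  have := hf u; rewrite e; lia.
have [a ha] := IH c' (tp j * w)%g (ltac:(by rewrite hc')) hmax' (ltac:(lia)).
by exists (a * (1 + pb j)); rewrite -mulrA E.
Qed.


Lemma nondeg (A : falgType algC) (pb : nat -> A) r (eps : A -> algC)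
  (H1 : forall i, (1 <= i <= r.-1)%N -> pb i * pb i = - pb i)
  (H2 : forall i, (1 <= i)%N -> (i.+1 <= r.-1)%N ->
        pb i * pb i.+1 * pb i = pb i.+1 * pb i * pb i.+1)
  (H3 : forall i j, (1 <= i <= r.-1)%N -> (1 <= j <= r.-1)%N -> (i.+1 < j)%N ->
        pb i * pb j = pb j * pb i)
  (HB : basis_of fullv [seq piw pb w | w <- enum [set: 'S_r]])
  (epsL : linf eps) (epsW : forall w : 'S_r, eps (piw pb w) = (w == w0 r)%:R) :
  forall m, (forall a, eps (a * m) = 0) -> m = 0.
Proof.
move=> m hm; have [c em] := decomp HB m; rewrite em in hm *.
case: (boolP [exists w, c w != 0]) => [/existsP [w1 hw1]|].
  case: (@arg_maxnP _ w1 (fun w => c w != 0) (@linv r) hw1) => w hw hmaxw.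
  have hmax : forall u, (linv w < linv u)%N -> c u = 0.
    move=> u hu; apply/eqP; apply: contraTT hu => hu; rewrite -leqNgt; exact: hmaxw.
  have [a ha] := key_nd H1 H2 H3 epsL epsW hw hmax (erefl (r * r - linv w)%N).
  by rewrite hm eqxx in ha.
rewrite negb_exists => /forallP h0; rewrite big1 // => w _.
by have := h0 w; rewrite negbK => /eqP ->; rewrite scale0r.
Qed.

Lemma surj (A : falgType algC) (eps : A -> algC) (X : seq A) :
  basis_of fullv X -> linf eps -> (forall m, (forall a, eps (a * m) = 0) -> m = 0) ->
  forall D : A -> algC, linf D -> exists h, forall z, eps (z * h) = D z.
Proof.
move=> hB epsL nd D DL.
pose n := size X; pose T := in_tuple X.
have hBT : basis_of fullv T by [].
have /freeP fr := basis_free hBT.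
have expand : forall z, z = \sum_(i < n) coord T i z *: T`_i.
  by move=> z; apply: (coord_basis hBT (memvf z)).
pose G : 'M[algC]_n := \matrix_(i, j) eps (T`_j * T`_i).
have key : forall x : 'rV[algC]_n, forall j : 'I_n,
    eps (T`_j * \sum_(i < n) x 0 i *: T`_i) = (x *m G) 0 j.
  move=> x j; rewrite (lin_sum _ _ (linf_l _ epsL)) mxE.
  by apply: eq_bigr => i _; rewrite mxE.
have ext : forall h, forall z, eps (z * h) = \sum_(j < n) coord T j z * eps (T`_j * h).
  by move=> h z; rewrite {1}(expand z) (lin_sum _ _ (linf_r _ epsL)).
have uG : G \in unitmx.
  rewrite -row_free_unit -kermx_eq0; apply/rowV0P => v /sub_kermxP hv.
  have h0 : \sum_(i < n) v 0 i *: T`_i = 0.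
    by apply: nd => a; rewrite ext big1 // => j _; rewrite key hv mxE mulr0.
  by apply/rowP => i; rewrite mxE (fr _ h0).
pose d : 'rV[algC]_n := \row_j D T`_j.
pose x := d *m invmx G.
exists (\sum_(i < n) x 0 i *: T`_i) => z.
rewrite ext {2}(expand z) (lin_sum _ _ DL); apply: eq_bigr => j _.
by rewrite key mulmxKV // mxE.
Qed.


Lemma comps_pos r c : c \in comps r -> all (fun k => 0 < k)%N c.
Proof.
elim: r c => [|r IH] c /=; first by rewrite inE => /eqP ->.
rewrite mem_cat => /orP[/mapP [c' hc' ->]|/mapP [c' ]] /=; first exact: IH.
rewrite mem_filter => /andP [hne hc'] ->; have := IH _ hc'.
by case: c' hne {hc'} => //= x t _ /andP[].
Qed.

Lemma comps_uniq r : uniq (comps r).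
Proof.
elim: r => [|r IH] //=; rewrite cat_uniq map_inj_uniq ?IH; last by move=> x y [].
rewrite map_inj_in_uniq ?filter_uniq ?IH //=.
  apply/andP; split => //.
  apply/hasPn => y /mapP [c]; rewrite mem_filter => /andP[hne hc] ->.
  by apply/mapP => [[c' _ e]]; have := comps_pos hc; case: c hne hc e => //= x t _ _ [->].
move=> c1 c2; rewrite !mem_filter => /andP[h1 _] /andP[h2 _].
by case: c1 h1 => // x1 t1 _; case: c2 h2 => // x2 t2 _ /= [-> ->].
Qed.

Unset Implicit Arguments.
Set Strict Implicit.

Theorem mainTheorem12 (A : falgType algC) (r n : nat) (pb : nat -> A)
    (eps : A -> algC) (phi : A -> A) (chi : seq nat -> A -> algC) (ec : seq nat -> A)
    (alpha : seq nat) :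
  is_zero_Hecke r pb -> is_eps r pb eps -> is_phi r pb eps phi ->
  is_PIM_idempotents r pb chi ec -> alpha \in comps r ->
  let e := etrunc r n ec in
  let ea := ec alpha in
  let inN x := exists a : A, x = ea * a * e in      (* x in e_alpha H e *)
  let inE y := exists a : A, y = e * a * e in       (* y in e H e *)
  [/\ (* Theta is well defined *)
      forall h h', e * h * phi ea = e * h' * phi ea ->
        forall x, inN x -> eps (x * h) = eps (x * h'),
      (* Theta is C-linear *)
      forall (c : algC) h1 h2 h, c *: (e * h1 * phi ea) + e * h2 * phi ea = e * h * phi ea ->
        forall x, inN x -> eps (x * h) = c * eps (x * h1) + eps (x * h2),
      (* Theta is a homomorphism of left eHe-modules: Theta(y.m) = y.Theta(m) *)
      forall y h h', inE y -> y * (e * h * phi ea) = e * h' * phi ea ->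
        forall x, inN x -> eps (x * h') = eps ((x * y) * h),
      (* Theta is injective *)
      forall h, (forall x, inN x -> eps (x * h) = 0) -> e * h * phi ea = 0
    & (* Theta is surjective onto (e_alpha H e)^* *)
      forall delta : A -> algC,
        (forall c x x', inN x -> inN x' -> delta (c *: x + x') = c * delta x + delta x') ->
        exists h, forall x, inN x -> eps (x * h) = delta x].
Proof.
move=> [H1 H2 H3 HB] [epsL epsW] [phiL phiM phi1 phiPb Nak] [Hchi Hprim Horth Hsum Hnz] ha.
move=> e ea inN inE.
have nd := nondeg H1 H2 H3 HB epsL epsW.
have L0 : forall a h, eps (ea * a * e * h) = eps (a * (e * h * phi ea)).
  by move=> a h; rewrite -!mulrA [LHS]Nak !mulrA.
have eaea : ea * ea = ea by rewrite /ea Horth // eqxx.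
have ee : e * e = e.
  rewrite /e /etrunc -big_filter.
  set s := filter _ (comps r).
  have us : uniq s := filter_uniq _ (comps_uniq r).
  have ss : forall b, b \in s -> b \in comps r by move=> b; rewrite mem_filter => /andP[].
  rewrite mulr_suml; apply: eq_big_seq => b hb; rewrite mulr_sumr (bigD1_seq b) //= Horth ?ss // eqxx.
  rewrite big_seq_cond big1 ?addr0 // => c /andP[hc hcb].
  by rewrite Horth ?ss // eq_sym (negbTE hcb).
have xee : forall x, x * e * e = x * e by move=> x; rewrite -mulrA ee.
split.
- by move=> h h' E x [a ->]; rewrite !L0 E.
- move=> c h1 h2 h E x [a ->]; rewrite !L0 -E mulrDr -scalerAr.
  by rewrite epsL.
- move=> y h h' [b ->] E x [a ->].
  have -> : ea * a * e * (e * b * e) = ea * (a * e * e * b) * e by rewrite !mulrA.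
  by rewrite !L0 -E !mulrA !xee.
- move=> h H; apply: nd => a; rewrite -L0; apply: H; by exists a.
move=> delta hd.
pose D z := delta (ea * z * e).
have DL : linf D.
  move=> c a b; rewrite /D mulrDr mulrDl -scalerAr -scalerAl hd //.
    by exists a.
  by exists b.
have [h hh] := surj HB epsL nd DL.
exists h => x [a ->]; rewrite hh /D.
by rewrite !mulrA eaea xee.
Qed.
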